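(* The nilpotent Lie algebra $\mathfrak{h}_5\oplus\mathbb{R}^3$ admits weak HKT structures and does not admit any SKT structure. The Lie algebras $\mathfrak{h}_3^{\mathbb{C}}\oplus\mathbb{R}^2$ and $\mathfrak{h}_7^Q\oplus\mathbb{R}$ admit SKT structures and weak HKT structures.
   Context: $\mathfrak{h}_5$ is the $5$-dimensional Heisenberg Lie algebra (basis $e_1,\dots,e_5$ with dual basis satisfying $de^i=0$ for $i\le4$, $de^5=e^{12}+e^{34}$); $\mathfrak{h}_3^{\mathbb{C}}$ is the complex $3$-dimensional Heisenberg Lie algebra regarded as a real $6$-dimensional Lie algebra; $\mathfrak{h}_7^Q$ is the $7$-dimensional quaternionic Heisenberg Lie algebra (with $3$-dimensional center), given by $de^i=0$ for $i\le4$, $de^5=e^{12}+e^{34}$, $de^6=e^{13}-e^{24}$, $de^7=e^{14}+e^{23}$. An SKT structure on a Lie algebra is a complex structure $J$ together with a $J$-compatible inner product $g$ whose fundamental form $\omega=g(J\cdot,\cdot)$ satisfies $\partial\bar\partial\omega=0$. An HKT structure is a hypercomplex structure $(J_1,J_2,J_3)$ (complex structures with $J_1J_2=-J_2J_1=J_3$) with an inner product $g$ compatible with each $J_l$ such that $J_1d\omega_1=J_2d\omega_2=J_3d\omega_3$, where $\omega_l=g(J_l\cdot,\cdot)$; it is weak if the torsion $3$-form of the common Bismut connection is not closed. *)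

(* Defs.v *)
(* Real Lie algebras of dimension n are modelled on the column
   vectors 'cV[R]_n over a realType R (the real numbers), with the bracket
   determined by the differentials of the dual basis. *)
From HB Require Import structures.
From mathcomp Require Import all_boot all_order all_algebra.
From mathcomp Require Import reals.
Set Implicit Arguments. Unset Strict Implicit. Unset Printing Implicit Defensive.
Import Order.TTheory GRing.Theory Num.Theory.
Local Open Scope ring_scope.

Section LieForms.
Variable R : realType.
Variable n : nat.
Local Notation V := 'cV[R]_n.

Definition act (J : 'M[R]_n) (x : V) : V := J *m x.

(* Bracket from the structure equations: de^k(x,y) = - e^k([x,y]),
   i.e. the Chevalley--Eilenberg convention d a (x,y) = - a([x,y]). *)
Definition bracket_of (D : 'I_n -> V -> V -> R) (x y : V) : V :=
  \col_k (- D k x y).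

Section WithBracket.
Variable br : V -> V -> V.

Definition d2 (a : V -> V -> R) : V -> V -> V -> R :=
  fun x0 x1 x2 => - a (br x0 x1) x2 + a (br x0 x2) x1 - a (br x1 x2) x0.

Definition d3 (a : V -> V -> V -> R) : V -> V -> V -> V -> R :=
  fun x0 x1 x2 x3 =>
      - a (br x0 x1) x2 x3 + a (br x0 x2) x1 x3 - a (br x0 x3) x1 x2
      - a (br x1 x2) x0 x3 + a (br x1 x3) x0 x2 - a (br x2 x3) x0 x1.

Definition Jform3 (J : 'M[R]_n) (a : V -> V -> V -> R) : V -> V -> V -> R :=
  fun x y z => a (act J x) (act J y) (act J z).

Definition complex_structure (J : 'M[R]_n) : Prop :=
  (forall x, act J (act J x) = - x) /\
  (forall x y, br (act J x) (act J y) - act J (br (act J x) y)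
               - act J (br x (act J y)) - br x y = 0).

Definition ip (G : 'M[R]_n) (x y : V) : R := (x^T *m G *m y) ord0 ord0.

Definition inner_product (G : 'M[R]_n) : Prop :=
  G^T = G /\ (forall x : V, x != 0 -> 0 < ip G x x).

Definition compatible (J G : 'M[R]_n) : Prop :=
  forall x y, ip G (act J x) (act J y) = ip G x y.

Definition fundamental_form (J G : 'M[R]_n) : V -> V -> R :=
  fun x y => ip G (act J x) y.

(* torsion 3-form of the Bismut connection, H = J d omega (up to a global
   sign convention, irrelevant for closedness). *)
Definition bismut_torsion (J G : 'M[R]_n) : V -> V -> V -> R :=
  Jform3 J (d2 (fundamental_form J G)).

(* SKT: d d^c omega = 0, i.e. 2i ∂∂bar omega = d(J d omega) = 0 *)
Definition SKT_structure (J G : 'M[R]_n) : Prop :=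
  [/\ complex_structure J, inner_product G, compatible J G &
      forall x0 x1 x2 x3,
        d3 (Jform3 J (d2 (fundamental_form J G))) x0 x1 x2 x3 = 0].

Definition has_SKT : Prop := exists J G, SKT_structure J G.

Definition hypercomplex (J1 J2 J3 : 'M[R]_n) : Prop :=
  [/\ complex_structure J1, complex_structure J2, complex_structure J3 &
      forall x, act J1 (act J2 x) = act J3 x /\ act J2 (act J1 x) = - act J3 x].

Definition HKT_structure (J1 J2 J3 G : 'M[R]_n) : Prop :=
  [/\ hypercomplex J1 J2 J3, inner_product G,
      compatible J1 G /\ compatible J2 G /\ compatible J3 G &
      forall x y z,
        Jform3 J1 (d2 (fundamental_form J1 G)) x y z
          = Jform3 J2 (d2 (fundamental_form J2 G)) x y z /\
        Jform3 J2 (d2 (fundamental_form J2 G)) x y z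
          = Jform3 J3 (d2 (fundamental_form J3 G)) x y z].

Definition weak_HKT_structure (J1 J2 J3 G : 'M[R]_n) : Prop :=
  HKT_structure J1 J2 J3 G /\
  exists x0 x1 x2 x3, d3 (bismut_torsion J1 G) x0 x1 x2 x3 != 0.

Definition has_weak_HKT : Prop :=
  exists J1 J2 J3 G, weak_HKT_structure J1 J2 J3 G.

End WithBracket.
End LieForms.

Section Examples.
Variable R : realType.
Local Notation V := 'cV[R]_8.

(* e^{ij}(x,y) = x_i y_j - x_j y_i, with 0-based i j *)
Definition e2 (i j : nat) (x y : V) : R :=
  x (inord i) ord0 * y (inord j) ord0 - x (inord j) ord0 * y (inord i) ord0.

(* h_5 + R^3 : de^5 = e^12 + e^34 *)
Definition D_h5R3 (k : 'I_8) (x y : V) : R :=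
  if val k == 4%N then e2 0 1 x y + e2 2 3 x y else 0.

(* h_3^C + R^2 : de^5 = e^13 - e^24, de^6 = e^14 + e^23 *)
Definition D_h3CR2 (k : 'I_8) (x y : V) : R :=
  if val k == 4%N then e2 0 2 x y - e2 1 3 x y
  else if val k == 5%N then e2 0 3 x y + e2 1 2 x y
  else 0.

(* h_7^Q + R : de^5 = e^12+e^34, de^6 = e^13-e^24, de^7 = e^14+e^23 *)
Definition D_h7QR1 (k : 'I_8) (x y : V) : R :=
  if val k == 4%N then e2 0 1 x y + e2 2 3 x y
  else if val k == 5%N then e2 0 2 x y - e2 1 3 x y
  else if val k == 6%N then e2 0 3 x y + e2 1 2 x y
  else 0.

Definition h5R3 : V -> V -> V := bracket_of D_h5R3.
Definition h3CR2 : V -> V -> V := bracket_of D_h3CR2.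
Definition h7QR1 : V -> V -> V := bracket_of D_h7QR1.
End Examples.

(* Main.v *)
Require Import Defs.
From HB Require Import structures.
From mathcomp Require Import all_boot all_order all_algebra.
From mathcomp Require Import reals.
From mathcomp Require Import ring lra.
Set Implicit Arguments. Unset Strict Implicit. Unset Printing Implicit Defensive.
Import Order.TTheory GRing.Theory Num.Theory.
Local Open Scope ring_scope.
Section Inf.
Variable R : realType.
Local Notation V := 'cV[R]_8.

Definition vec8 (a0 a1 a2 a3 a4 a5 a6 a7 : R) : V :=
  \col_(k < 8) nth 0 [:: a0; a1; a2; a3; a4; a5; a6; a7] k.

Lemma vec8E a0 a1 a2 a3 a4 a5 a6 a7 (i : nat) : (i < 8)%N ->
  vec8 a0 a1 a2 a3 a4 a5 a6 a7 (inord i) ord0 = nth 0 [:: a0; a1; a2; a3; a4; a5; a6; a7] i.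
Proof. by move=> hi; rewrite mxE inordK. Qed.

Lemma vec8_surj (x : V) : exists a0 a1 a2 a3 a4 a5 a6 a7,
  x = vec8 a0 a1 a2 a3 a4 a5 a6 a7.
Proof.
exists (x (inord 0) ord0), (x (inord 1) ord0), (x (inord 2) ord0), (x (inord 3) ord0),
  (x (inord 4) ord0), (x (inord 5) ord0), (x (inord 6) ord0), (x (inord 7) ord0).
apply/matrixP => i j; rewrite (ord1 j) mxE.
case: i => [[|[|[|[|[|[|[|[|//]]]]]]]] Hi] /=;
  congr (x _ _); apply/val_inj; by rewrite /= inordK.
Qed.

Lemma add8 a0 a1 a2 a3 a4 a5 a6 a7 b0 b1 b2 b3 b4 b5 b6 b7 :
  vec8 a0 a1 a2 a3 a4 a5 a6 a7 + vec8 b0 b1 b2 b3 b4 b5 b6 b7 =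
  vec8 (a0+b0) (a1+b1) (a2+b2) (a3+b3) (a4+b4) (a5+b5) (a6+b6) (a7+b7).
Proof.
apply/matrixP => i j; rewrite !mxE.
by case: i => [[|[|[|[|[|[|[|[|//]]]]]]]] Hi].
Qed.

Lemma opp8 a0 a1 a2 a3 a4 a5 a6 a7 :
  - vec8 a0 a1 a2 a3 a4 a5 a6 a7 = vec8 (-a0) (-a1) (-a2) (-a3) (-a4) (-a5) (-a6) (-a7).
Proof.
apply/matrixP => i j; rewrite !mxE.
by case: i => [[|[|[|[|[|[|[|[|//]]]]]]]] Hi].
Qed.

Lemma scale8 c a0 a1 a2 a3 a4 a5 a6 a7 :
  c *: vec8 a0 a1 a2 a3 a4 a5 a6 a7 = vec8 (c*a0) (c*a1) (c*a2) (c*a3) (c*a4) (c*a5) (c*a6) (c*a7).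
Proof.
apply/matrixP => i j; rewrite !mxE.
by case: i => [[|[|[|[|[|[|[|[|//]]]]]]]] Hi].
Qed.

Lemma zero8 : (0 : V) = vec8 0 0 0 0 0 0 0 0.
Proof.
apply/matrixP => i j; rewrite !mxE.
by case: i => [[|[|[|[|[|[|[|[|//]]]]]]]] Hi].
Qed.

Definition mxl (l : seq (seq R)) : 'M[R]_8 := \matrix_(i < 8, j < 8) nth 0 (nth [::] l i) j.

Definition rdot (r : seq R) a0 a1 a2 a3 a4 a5 a6 a7 :=
  nth 0 r 0 * a0 + nth 0 r 1 * a1 + nth 0 r 2 * a2 + nth 0 r 3 * a3 +
  nth 0 r 4 * a4 + nth 0 r 5 * a5 + nth 0 r 6 * a6 + nth 0 r 7 * a7.

Lemma mul8 l a0 a1 a2 a3 a4 a5 a6 a7 :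
  mxl l *m vec8 a0 a1 a2 a3 a4 a5 a6 a7 =
  vec8 (rdot (nth [::] l 0) a0 a1 a2 a3 a4 a5 a6 a7)
       (rdot (nth [::] l 1) a0 a1 a2 a3 a4 a5 a6 a7)
       (rdot (nth [::] l 2) a0 a1 a2 a3 a4 a5 a6 a7)
       (rdot (nth [::] l 3) a0 a1 a2 a3 a4 a5 a6 a7)
       (rdot (nth [::] l 4) a0 a1 a2 a3 a4 a5 a6 a7)
       (rdot (nth [::] l 5) a0 a1 a2 a3 a4 a5 a6 a7)
       (rdot (nth [::] l 6) a0 a1 a2 a3 a4 a5 a6 a7)
       (rdot (nth [::] l 7) a0 a1 a2 a3 a4 a5 a6 a7).
Proof.
apply/matrixP => i j; rewrite !mxE.
rewrite !big_ord_recr big_ord0 /= !mxE /= /rdot add0r.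
by case: i => [[|[|[|[|[|[|[|[|//]]]]]]]] Hi].
Qed.

Lemma dot8 a0 a1 a2 a3 a4 a5 a6 a7 b0 b1 b2 b3 b4 b5 b6 b7 :
  ((vec8 a0 a1 a2 a3 a4 a5 a6 a7)^T *m vec8 b0 b1 b2 b3 b4 b5 b6 b7) ord0 ord0 =
  a0*b0 + a1*b1 + a2*b2 + a3*b3 + a4*b4 + a5*b5 + a6*b6 + a7*b7.
Proof.
rewrite !mxE !big_ord_recr big_ord0 /= !mxE /= add0r.
done.
Qed.

Lemma ip8 l a0 a1 a2 a3 a4 a5 a6 a7 b0 b1 b2 b3 b4 b5 b6 b7 :
  ip (mxl l) (vec8 a0 a1 a2 a3 a4 a5 a6 a7) (vec8 b0 b1 b2 b3 b4 b5 b6 b7) =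
  a0 * rdot (nth [::] l 0) b0 b1 b2 b3 b4 b5 b6 b7 +
  a1 * rdot (nth [::] l 1) b0 b1 b2 b3 b4 b5 b6 b7 +
  a2 * rdot (nth [::] l 2) b0 b1 b2 b3 b4 b5 b6 b7 +
  a3 * rdot (nth [::] l 3) b0 b1 b2 b3 b4 b5 b6 b7 +
  a4 * rdot (nth [::] l 4) b0 b1 b2 b3 b4 b5 b6 b7 +
  a5 * rdot (nth [::] l 5) b0 b1 b2 b3 b4 b5 b6 b7 +
  a6 * rdot (nth [::] l 6) b0 b1 b2 b3 b4 b5 b6 b7 +
  a7 * rdot (nth [::] l 7) b0 b1 b2 b3 b4 b5 b6 b7.
Proof. by rewrite /ip -mulmxA mul8 dot8. Qed.


Lemma br5 a0 a1 a2 a3 a4 a5 a6 a7 b0 b1 b2 b3 b4 b5 b6 b7 :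
  h5R3 (vec8 a0 a1 a2 a3 a4 a5 a6 a7) (vec8 b0 b1 b2 b3 b4 b5 b6 b7) =
  vec8 0 0 0 0 (-((a0*b1 - a1*b0) + (a2*b3 - a3*b2))) 0 0 0.
Proof.
apply/matrixP => i j; rewrite !mxE /D_h5R3 /e2.
by case: i => [[|[|[|[|[|[|[|[|//]]]]]]]] Hi] /=; rewrite ?oppr0 // !vec8E.
Qed.

Lemma br3C a0 a1 a2 a3 a4 a5 a6 a7 b0 b1 b2 b3 b4 b5 b6 b7 :
  h3CR2 (vec8 a0 a1 a2 a3 a4 a5 a6 a7) (vec8 b0 b1 b2 b3 b4 b5 b6 b7) =
  vec8 0 0 0 0 (-((a0*b2 - a2*b0) - (a1*b3 - a3*b1)))
               (-((a0*b3 - a3*b0) + (a1*b2 - a2*b1))) 0 0.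
Proof.
apply/matrixP => i j; rewrite !mxE /D_h3CR2 /e2.
by case: i => [[|[|[|[|[|[|[|[|//]]]]]]]] Hi] /=; rewrite ?oppr0 // !vec8E.
Qed.

Lemma br7Q a0 a1 a2 a3 a4 a5 a6 a7 b0 b1 b2 b3 b4 b5 b6 b7 :
  h7QR1 (vec8 a0 a1 a2 a3 a4 a5 a6 a7) (vec8 b0 b1 b2 b3 b4 b5 b6 b7) =
  vec8 0 0 0 0 (-((a0*b1 - a1*b0) + (a2*b3 - a3*b2)))
               (-((a0*b2 - a2*b0) - (a1*b3 - a3*b1)))
               (-((a0*b3 - a3*b0) + (a1*b2 - a2*b1))) 0.
Proof.
apply/matrixP => i j; rewrite !mxE /D_h7QR1 /e2.
by case: i => [[|[|[|[|[|[|[|[|//]]]]]]]] Hi] /=; rewrite ?oppr0 // !vec8E.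
Qed.
Ltac dv x := let a0 := fresh "a" in let a1 := fresh "a" in let a2 := fresh "a" in
  let a3 := fresh "a" in let a4 := fresh "a" in let a5 := fresh "a" in
  let a6 := fresh "a" in let a7 := fresh "a" in
  have [a0 [a1 [a2 [a3 [a4 [a5 [a6 [a7 ->]]]]]]]] := vec8_surj x.
End Inf.
Section Gen.
Variable R : realType.
Definition JA : 'M[R]_8 := mxl [:: [:: 0; (-1); 0; 0; 0; 0; 0; 0]; [:: 1; 0; 0; 0; 0; 0; 0; 0]; [:: 0; 0; 0; 1; 0; 0; 0; 0]; [:: 0; 0; (-1); 0; 0; 0; 0; 0]; [:: 0; 0; 0; 0; 0; (-1); 0; 0]; [:: 0; 0; 0; 0; 1; 0; 0; 0]; [:: 0; 0; 0; 0; 0; 0; 0; (-1)]; [:: 0; 0; 0; 0; 0; 0; 1; 0]].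

Definition JB : 'M[R]_8 := mxl [:: [:: 0; 0; (-1); 0; 0; 0; 0; 0]; [:: 0; 0; 0; (-1); 0; 0; 0; 0]; [:: 1; 0; 0; 0; 0; 0; 0; 0]; [:: 0; 1; 0; 0; 0; 0; 0; 0]; [:: 0; 0; 0; 0; 0; 0; (-1); 0]; [:: 0; 0; 0; 0; 0; 0; 0; 1]; [:: 0; 0; 0; 0; 1; 0; 0; 0]; [:: 0; 0; 0; 0; 0; (-1); 0; 0]].

Definition JC : 'M[R]_8 := mxl [:: [:: 0; 0; 0; 1; 0; 0; 0; 0]; [:: 0; 0; (-1); 0; 0; 0; 0; 0]; [:: 0; 1; 0; 0; 0; 0; 0; 0]; [:: (-1); 0; 0; 0; 0; 0; 0; 0]; [:: 0; 0; 0; 0; 0; 0; 0; (-1)]; [:: 0; 0; 0; 0; 0; 0; (-1); 0]; [:: 0; 0; 0; 0; 0; 1; 0; 0]; [:: 0; 0; 0; 0; 1; 0; 0; 0]].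

Definition J7 : 'M[R]_8 := mxl [:: [:: 0; (-1); 0; 0; 0; 0; 0; 0]; [:: 1; 0; 0; 0; 0; 0; 0; 0]; [:: 0; 0; 0; (-1); 0; 0; 0; 0]; [:: 0; 0; 1; 0; 0; 0; 0; 0]; [:: 0; 0; 0; 0; 0; 0; 0; (-1)]; [:: 0; 0; 0; 0; 0; 0; (-1); 0]; [:: 0; 0; 0; 0; 0; 1; 0; 0]; [:: 0; 0; 0; 0; 1; 0; 0; 0]].

Definition J3s : 'M[R]_8 := mxl [:: [:: 0; (-(7/4)); (1/2); 2; 0; 0; 0; 0]; [:: 0; (-(1/2)); 1; 0; 0; 0; 0; 0]; [:: 0; (-(5/4)); (1/2); 0; 0; 0; 0; 0]; [:: (-(1/2)); (-(1/8)); (3/4); 0; 0; 0; 0; 0]; [:: 0; 0; 0; 0; 0; (-2); 0; 0]; [:: 0; 0; 0; 0; (1/2); 0; 0; 0]; [:: 0; 0; 0; 0; 0; 0; 0; (-1)]; [:: 0; 0; 0; 0; 0; 0; 1; 0]].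

Definition G1 : 'M[R]_8 := mxl [:: [:: 1; 0; 0; 0; 0; 0; 0; 0]; [:: 0; 1; 0; 0; 0; 0; 0; 0]; [:: 0; 0; 1; 0; 0; 0; 0; 0]; [:: 0; 0; 0; 1; 0; 0; 0; 0]; [:: 0; 0; 0; 0; 1; 0; 0; 0]; [:: 0; 0; 0; 0; 0; 1; 0; 0]; [:: 0; 0; 0; 0; 0; 0; 1; 0]; [:: 0; 0; 0; 0; 0; 0; 0; 1]].

Definition G7 : 'M[R]_8 := mxl [:: [:: 1; 0; 0; 0; 0; 0; 0; 0]; [:: 0; 1; 0; 0; 0; 0; 0; 0]; [:: 0; 0; 1; 0; 0; 0; 0; 0]; [:: 0; 0; 0; 1; 0; 0; 0; 0]; [:: 0; 0; 0; 0; 2; 0; 0; 0]; [:: 0; 0; 0; 0; 0; 1; 0; 0]; [:: 0; 0; 0; 0; 0; 0; 1; 0]; [:: 0; 0; 0; 0; 0; 0; 0; 2]].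

Definition G3s : 'M[R]_8 := mxl [:: [:: 1; (1/4); (-(1/2)); 0; 0; 0; 0; 0]; [:: (1/4); (9/4); (-1); (-(5/2)); 0; 0; 0; 0]; [:: (-(1/2)); (-1); 1; 1; 0; 0; 0; 0]; [:: 0; (-(5/2)); 1; 4; 0; 0; 0; 0]; [:: 0; 0; 0; 0; 4; 0; 0; 0]; [:: 0; 0; 0; 0; 0; 16; 0; 0]; [:: 0; 0; 0; 0; 0; 0; 1; 0]; [:: 0; 0; 0; 0; 0; 0; 0; 1]].

Lemma act_JA a0 a1 a2 a3 a4 a5 a6 a7 : act JA (vec8 a0 a1 a2 a3 a4 a5 a6 a7) = vec8 ((- a1)) (a0) (a3) ((- a2)) ((- a5)) (a4) ((- a7)) (a6).
Proof. rewrite /act /JA mul8 /rdot /=; f_equal; by field. Qed.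

Lemma act_JB a0 a1 a2 a3 a4 a5 a6 a7 : act JB (vec8 a0 a1 a2 a3 a4 a5 a6 a7) = vec8 ((- a2)) ((- a3)) (a0) (a1) ((- a6)) (a7) (a4) ((- a5)).
Proof. rewrite /act /JB mul8 /rdot /=; f_equal; by field. Qed.

Lemma act_JC a0 a1 a2 a3 a4 a5 a6 a7 : act JC (vec8 a0 a1 a2 a3 a4 a5 a6 a7) = vec8 (a3) ((- a2)) (a1) ((- a0)) ((- a7)) ((- a6)) (a5) (a4).
Proof. rewrite /act /JC mul8 /rdot /=; f_equal; by field. Qed.

Lemma act_J7 a0 a1 a2 a3 a4 a5 a6 a7 : act J7 (vec8 a0 a1 a2 a3 a4 a5 a6 a7) = vec8 ((- a1)) (a0) ((- a3)) (a2) ((- a7)) ((- a6)) (a5) (a4).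
Proof. rewrite /act /J7 mul8 /rdot /=; f_equal; by field. Qed.

Lemma act_J3s a0 a1 a2 a3 a4 a5 a6 a7 : act J3s (vec8 a0 a1 a2 a3 a4 a5 a6 a7) = vec8 ((-(7/4)) * a1 + (1/2) * a2 + 2 * a3) ((-(1/2)) * a1 + a2) ((-(5/4)) * a1 + (1/2) * a2) ((-(1/2)) * a0 + (-(1/8)) * a1 + (3/4) * a2) ((-2) * a5) ((1/2) * a4) ((- a7)) (a6).
Proof. rewrite /act /J3s mul8 /rdot /=; f_equal; by field. Qed.

Lemma ip_G1 a0 a1 a2 a3 a4 a5 a6 a7 b0 b1 b2 b3 b4 b5 b6 b7 : ip G1 (vec8 a0 a1 a2 a3 a4 a5 a6 a7) (vec8 b0 b1 b2 b3 b4 b5 b6 b7) = (a0 * b0 + a1 * b1 + a2 * b2 + a3 * b3 + a4 * b4 + a5 * b5 + a6 * b6 + a7 * b7).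
Proof. rewrite /G1 ip8 /rdot /=; by field. Qed.

Lemma ip_G7 a0 a1 a2 a3 a4 a5 a6 a7 b0 b1 b2 b3 b4 b5 b6 b7 : ip G7 (vec8 a0 a1 a2 a3 a4 a5 a6 a7) (vec8 b0 b1 b2 b3 b4 b5 b6 b7) = (a0 * b0 + a1 * b1 + a2 * b2 + a3 * b3 + 2 * a4 * b4 + a5 * b5 + a6 * b6 + 2 * a7 * b7).
Proof. rewrite /G7 ip8 /rdot /=; by field. Qed.

Lemma ip_G3s a0 a1 a2 a3 a4 a5 a6 a7 b0 b1 b2 b3 b4 b5 b6 b7 : ip G3s (vec8 a0 a1 a2 a3 a4 a5 a6 a7) (vec8 b0 b1 b2 b3 b4 b5 b6 b7) = (a0 * b0 + (1/4) * a0 * b1 + (-(1/2)) * a0 * b2 + (1/4) * a1 * b0 + (9/4) * a1 * b1 + (- (a1 * b2)) + (-(5/2)) * a1 * b3 + (-(1/2)) * a2 * b0 + (- (a2 * b1)) + a2 * b2 + a2 * b3 + (-(5/2)) * a3 * b1 + a3 * b2 + 4 * a3 * b3 + 4 * a4 * b4 + 16 * a5 * b5 + a6 * b6 + a7 * b7).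
Proof. rewrite /G3s ip8 /rdot /=; by field. Qed.

Lemma gam_h5R3_JA_G1 a0 a1 a2 a3 a4 a5 a6 a7 b0 b1 b2 b3 b4 b5 b6 b7 c0 c1 c2 c3 c4 c5 c6 c7 :
  Jform3 JA (d2 (@h5R3 R) (fundamental_form JA G1)) (vec8 a0 a1 a2 a3 a4 a5 a6 a7) (vec8 b0 b1 b2 b3 b4 b5 b6 b7) (vec8 c0 c1 c2 c3 c4 c5 c6 c7) =
  (a0 * b1 * c4 + (- (a0 * b4 * c1)) + (- (a1 * b0 * c4)) + a1 * b4 * c0 + a2 * b3 * c4 + (- (a2 * b4 * c3)) + (- (a3 * b2 * c4)) + a3 * b4 * c2 + a4 * b0 * c1 + (- (a4 * b1 * c0)) + a4 * b2 * c3 + (- (a4 * b3 * c2))).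
Proof. rewrite /Jform3 /d2 /fundamental_form !act_JA !br5 !act_JA !ip_G1; by field. Qed.

Lemma gam_h5R3_JB_G1 a0 a1 a2 a3 a4 a5 a6 a7 b0 b1 b2 b3 b4 b5 b6 b7 c0 c1 c2 c3 c4 c5 c6 c7 :
  Jform3 JB (d2 (@h5R3 R) (fundamental_form JB G1)) (vec8 a0 a1 a2 a3 a4 a5 a6 a7) (vec8 b0 b1 b2 b3 b4 b5 b6 b7) (vec8 c0 c1 c2 c3 c4 c5 c6 c7) =
  (a0 * b1 * c4 + (- (a0 * b4 * c1)) + (- (a1 * b0 * c4)) + a1 * b4 * c0 + a2 * b3 * c4 + (- (a2 * b4 * c3)) + (- (a3 * b2 * c4)) + a3 * b4 * c2 + a4 * b0 * c1 + (- (a4 * b1 * c0)) + a4 * b2 * c3 + (- (a4 * b3 * c2))).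
Proof. rewrite /Jform3 /d2 /fundamental_form !act_JB !br5 !act_JB !ip_G1; by field. Qed.

Lemma gam_h5R3_JC_G1 a0 a1 a2 a3 a4 a5 a6 a7 b0 b1 b2 b3 b4 b5 b6 b7 c0 c1 c2 c3 c4 c5 c6 c7 :
  Jform3 JC (d2 (@h5R3 R) (fundamental_form JC G1)) (vec8 a0 a1 a2 a3 a4 a5 a6 a7) (vec8 b0 b1 b2 b3 b4 b5 b6 b7) (vec8 c0 c1 c2 c3 c4 c5 c6 c7) =
  (a0 * b1 * c4 + (- (a0 * b4 * c1)) + (- (a1 * b0 * c4)) + a1 * b4 * c0 + a2 * b3 * c4 + (- (a2 * b4 * c3)) + (- (a3 * b2 * c4)) + a3 * b4 * c2 + a4 * b0 * c1 + (- (a4 * b1 * c0)) + a4 * b2 * c3 + (- (a4 * b3 * c2))).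
Proof. rewrite /Jform3 /d2 /fundamental_form !act_JC !br5 !act_JC !ip_G1; by field. Qed.

Lemma gam_h3CR2_JA_G1 a0 a1 a2 a3 a4 a5 a6 a7 b0 b1 b2 b3 b4 b5 b6 b7 c0 c1 c2 c3 c4 c5 c6 c7 :
  Jform3 JA (d2 (@h3CR2 R) (fundamental_form JA G1)) (vec8 a0 a1 a2 a3 a4 a5 a6 a7) (vec8 b0 b1 b2 b3 b4 b5 b6 b7) (vec8 c0 c1 c2 c3 c4 c5 c6 c7) =
  (a0 * b2 * c4 + a0 * b3 * c5 + (- (a0 * b4 * c2)) + (- (a0 * b5 * c3)) + a1 * b2 * c5 + (- (a1 * b3 * c4)) + a1 * b4 * c3 + (- (a1 * b5 * c2)) + (- (a2 * b0 * c4)) + (- (a2 * b1 * c5)) + a2 * b4 * c0 + a2 * b5 * c1 + (- (a3 * b0 * c5)) + a3 * b1 * c4 + (- (a3 * b4 * c1)) + a3 * b5 * c0 + a4 * b0 * c2 + (- (a4 * b1 * c3)) + (- (a4 * b2 * c0)) + a4 * b3 * c1 + a5 * b0 * c3 + a5 * b1 * c2 + (- (a5 * b2 * c1)) + (- (a5 * b3 * c0))).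
Proof. rewrite /Jform3 /d2 /fundamental_form !act_JA !br3C !act_JA !ip_G1; by field. Qed.

Lemma gam_h3CR2_JB_G1 a0 a1 a2 a3 a4 a5 a6 a7 b0 b1 b2 b3 b4 b5 b6 b7 c0 c1 c2 c3 c4 c5 c6 c7 :
  Jform3 JB (d2 (@h3CR2 R) (fundamental_form JB G1)) (vec8 a0 a1 a2 a3 a4 a5 a6 a7) (vec8 b0 b1 b2 b3 b4 b5 b6 b7) (vec8 c0 c1 c2 c3 c4 c5 c6 c7) =
  (a0 * b2 * c4 + a0 * b3 * c5 + (- (a0 * b4 * c2)) + (- (a0 * b5 * c3)) + a1 * b2 * c5 + (- (a1 * b3 * c4)) + a1 * b4 * c3 + (- (a1 * b5 * c2)) + (- (a2 * b0 * c4)) + (- (a2 * b1 * c5)) + a2 * b4 * c0 + a2 * b5 * c1 + (- (a3 * b0 * c5)) + a3 * b1 * c4 + (- (a3 * b4 * c1)) + a3 * b5 * c0 + a4 * b0 * c2 + (- (a4 * b1 * c3)) + (- (a4 * b2 * c0)) + a4 * b3 * c1 + a5 * b0 * c3 + a5 * b1 * c2 + (- (a5 * b2 * c1)) + (- (a5 * b3 * c0))).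
Proof. rewrite /Jform3 /d2 /fundamental_form !act_JB !br3C !act_JB !ip_G1; by field. Qed.

Lemma gam_h3CR2_JC_G1 a0 a1 a2 a3 a4 a5 a6 a7 b0 b1 b2 b3 b4 b5 b6 b7 c0 c1 c2 c3 c4 c5 c6 c7 :
  Jform3 JC (d2 (@h3CR2 R) (fundamental_form JC G1)) (vec8 a0 a1 a2 a3 a4 a5 a6 a7) (vec8 b0 b1 b2 b3 b4 b5 b6 b7) (vec8 c0 c1 c2 c3 c4 c5 c6 c7) =
  (a0 * b2 * c4 + a0 * b3 * c5 + (- (a0 * b4 * c2)) + (- (a0 * b5 * c3)) + a1 * b2 * c5 + (- (a1 * b3 * c4)) + a1 * b4 * c3 + (- (a1 * b5 * c2)) + (- (a2 * b0 * c4)) + (- (a2 * b1 * c5)) + a2 * b4 * c0 + a2 * b5 * c1 + (- (a3 * b0 * c5)) + a3 * b1 * c4 + (- (a3 * b4 * c1)) + a3 * b5 * c0 + a4 * b0 * c2 + (- (a4 * b1 * c3)) + (- (a4 * b2 * c0)) + a4 * b3 * c1 + a5 * b0 * c3 + a5 * b1 * c2 + (- (a5 * b2 * c1)) + (- (a5 * b3 * c0))).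
Proof. rewrite /Jform3 /d2 /fundamental_form !act_JC !br3C !act_JC !ip_G1; by field. Qed.

Lemma gam_h7QR1_JA_G1 a0 a1 a2 a3 a4 a5 a6 a7 b0 b1 b2 b3 b4 b5 b6 b7 c0 c1 c2 c3 c4 c5 c6 c7 :
  Jform3 JA (d2 (@h7QR1 R) (fundamental_form JA G1)) (vec8 a0 a1 a2 a3 a4 a5 a6 a7) (vec8 b0 b1 b2 b3 b4 b5 b6 b7) (vec8 c0 c1 c2 c3 c4 c5 c6 c7) =
  (a0 * b1 * c4 + a0 * b2 * c5 + a0 * b3 * c6 + (- (a0 * b4 * c1)) + (- (a0 * b5 * c2)) + (- (a0 * b6 * c3)) + (- (a1 * b0 * c4)) + a1 * b2 * c6 + (- (a1 * b3 * c5)) + a1 * b4 * c0 + a1 * b5 * c3 + (- (a1 * b6 * c2)) + (- (a2 * b0 * c5)) + (- (a2 * b1 * c6)) + a2 * b3 * c4 + (- (a2 * b4 * c3)) + a2 * b5 * c0 + a2 * b6 * c1 + (- (a3 * b0 * c6)) + a3 * b1 * c5 + (- (a3 * b2 * c4)) + a3 * b4 * c2 + (- (a3 * b5 * c1)) + a3 * b6 * c0 + a4 * b0 * c1 + (- (a4 * b1 * c0)) + a4 * b2 * c3 + (- (a4 * b3 * c2)) + a5 * b0 * c2 + (- (a5 * b1 * c3)) + (- (a5 * b2 * c0)) + a5 * b3 * c1 + a6 * b0 * c3 + a6 * b1 * c2 + (- (a6 * b2 * c1)) + (- (a6 * b3 * c0))).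
Proof. rewrite /Jform3 /d2 /fundamental_form !act_JA !br7Q !act_JA !ip_G1; by field. Qed.

Lemma gam_h7QR1_JB_G1 a0 a1 a2 a3 a4 a5 a6 a7 b0 b1 b2 b3 b4 b5 b6 b7 c0 c1 c2 c3 c4 c5 c6 c7 :
  Jform3 JB (d2 (@h7QR1 R) (fundamental_form JB G1)) (vec8 a0 a1 a2 a3 a4 a5 a6 a7) (vec8 b0 b1 b2 b3 b4 b5 b6 b7) (vec8 c0 c1 c2 c3 c4 c5 c6 c7) =
  (a0 * b1 * c4 + a0 * b2 * c5 + a0 * b3 * c6 + (- (a0 * b4 * c1)) + (- (a0 * b5 * c2)) + (- (a0 * b6 * c3)) + (- (a1 * b0 * c4)) + a1 * b2 * c6 + (- (a1 * b3 * c5)) + a1 * b4 * c0 + a1 * b5 * c3 + (- (a1 * b6 * c2)) + (- (a2 * b0 * c5)) + (- (a2 * b1 * c6)) + a2 * b3 * c4 + (- (a2 * b4 * c3)) + a2 * b5 * c0 + a2 * b6 * c1 + (- (a3 * b0 * c6)) + a3 * b1 * c5 + (- (a3 * b2 * c4)) + a3 * b4 * c2 + (- (a3 * b5 * c1)) + a3 * b6 * c0 + a4 * b0 * c1 + (- (a4 * b1 * c0)) + a4 * b2 * c3 + (- (a4 * b3 * c2)) + a5 * b0 * c2 + (- (a5 * b1 * c3)) + (- (a5 * b2 * c0)) + a5 * b3 * c1 + a6 * b0 * c3 + a6 * b1 * c2 + (- (a6 * b2 * c1)) + (- (a6 * b3 * c0))).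
Proof. rewrite /Jform3 /d2 /fundamental_form !act_JB !br7Q !act_JB !ip_G1; by field. Qed.

Lemma gam_h7QR1_JC_G1 a0 a1 a2 a3 a4 a5 a6 a7 b0 b1 b2 b3 b4 b5 b6 b7 c0 c1 c2 c3 c4 c5 c6 c7 :
  Jform3 JC (d2 (@h7QR1 R) (fundamental_form JC G1)) (vec8 a0 a1 a2 a3 a4 a5 a6 a7) (vec8 b0 b1 b2 b3 b4 b5 b6 b7) (vec8 c0 c1 c2 c3 c4 c5 c6 c7) =
  (a0 * b1 * c4 + a0 * b2 * c5 + a0 * b3 * c6 + (- (a0 * b4 * c1)) + (- (a0 * b5 * c2)) + (- (a0 * b6 * c3)) + (- (a1 * b0 * c4)) + a1 * b2 * c6 + (- (a1 * b3 * c5)) + a1 * b4 * c0 + a1 * b5 * c3 + (- (a1 * b6 * c2)) + (- (a2 * b0 * c5)) + (- (a2 * b1 * c6)) + a2 * b3 * c4 + (- (a2 * b4 * c3)) + a2 * b5 * c0 + a2 * b6 * c1 + (- (a3 * b0 * c6)) + a3 * b1 * c5 + (- (a3 * b2 * c4)) + a3 * b4 * c2 + (- (a3 * b5 * c1)) + a3 * b6 * c0 + a4 * b0 * c1 + (- (a4 * b1 * c0)) + a4 * b2 * c3 + (- (a4 * b3 * c2)) + a5 * b0 * c2 + (- (a5 * b1 * c3)) + (- (a5 * b2 * c0)) + a5 * b3 * c1 + a6 * b0 * c3 + a6 * b1 * c2 + (- (a6 * b2 * c1)) + (- (a6 * b3 * c0))).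
Proof. rewrite /Jform3 /d2 /fundamental_form !act_JC !br7Q !act_JC !ip_G1; by field. Qed.

Lemma gam_h3CR2_J3s_G3s a0 a1 a2 a3 a4 a5 a6 a7 b0 b1 b2 b3 b4 b5 b6 b7 c0 c1 c2 c3 c4 c5 c6 c7 :
  Jform3 J3s (d2 (@h3CR2 R) (fundamental_form J3s G3s)) (vec8 a0 a1 a2 a3 a4 a5 a6 a7) (vec8 b0 b1 b2 b3 b4 b5 b6 b7) (vec8 c0 c1 c2 c3 c4 c5 c6 c7) =
  (a0 * b1 * c4 + (-14) * a0 * b1 * c5 + (-2) * a0 * b2 * c4 + 4 * a0 * b2 * c5 + 16 * a0 * b3 * c5 + (- (a0 * b4 * c1)) + 2 * a0 * b4 * c2 + 14 * a0 * b5 * c1 + (-4) * a0 * b5 * c2 + (-16) * a0 * b5 * c3 + (- (a1 * b0 * c4)) + 14 * a1 * b0 * c5 + (-4) * a1 * b2 * c5 + 10 * a1 * b3 * c4 + 4 * a1 * b3 * c5 + a1 * b4 * c0 + (-10) * a1 * b4 * c3 + (-14) * a1 * b5 * c0 + 4 * a1 * b5 * c2 + (-4) * a1 * b5 * c3 + 2 * a2 * b0 * c4 + (-4) * a2 * b0 * c5 + 4 * a2 * b1 * c5 + (-4) * a2 * b3 * c4 + (-24) * a2 * b3 * c5 + (-2) * a2 * b4 * c0 + 4 * a2 * b4 * c3 + 4 * a2 * b5 * c0 + (-4) * a2 * b5 * c1 + 24 * a2 * b5 * c3 + (-16) * a3 * b0 * c5 + (-10) * a3 * b1 * c4 + (-4)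 * a3 * b1 * c5 + 4 * a3 * b2 * c4 + 24 * a3 * b2 * c5 + 10 * a3 * b4 * c1 + (-4) * a3 * b4 * c2 + 16 * a3 * b5 * c0 + 4 * a3 * b5 * c1 + (-24) * a3 * b5 * c2 + a4 * b0 * c1 + (-2) * a4 * b0 * c2 + (- (a4 * b1 * c0)) + 10 * a4 * b1 * c3 + 2 * a4 * b2 * c0 + (-4) * a4 * b2 * c3 + (-10) * a4 * b3 * c1 + 4 * a4 * b3 * c2 + (-14) * a5 * b0 * c1 + 4 * a5 * b0 * c2 + 16 * a5 * b0 * c3 + 14 * a5 * b1 * c0 + (-4) * a5 * b1 * c2 + 4 * a5 * b1 * c3 + (-4) * a5 * b2 * c0 + 4 * a5 * b2 * c1 + (-24) * a5 * b2 * c3 + (-16) * a5 * b3 * c0 + (-4) * a5 * b3 * c1 + 24 * a5 * b3 * c2).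
Proof. rewrite /Jform3 /d2 /fundamental_form !act_J3s !br3C !act_J3s !ip_G3s; by field. Qed.

Lemma gam_h7QR1_J7_G7 a0 a1 a2 a3 a4 a5 a6 a7 b0 b1 b2 b3 b4 b5 b6 b7 c0 c1 c2 c3 c4 c5 c6 c7 :
  Jform3 J7 (d2 (@h7QR1 R) (fundamental_form J7 G7)) (vec8 a0 a1 a2 a3 a4 a5 a6 a7) (vec8 b0 b1 b2 b3 b4 b5 b6 b7) (vec8 c0 c1 c2 c3 c4 c5 c6 c7) =
  (2 * a0 * b1 * c4 + (- (a0 * b2 * c5)) + (- (a0 * b3 * c6)) + (-2) * a0 * b4 * c1 + a0 * b5 * c2 + a0 * b6 * c3 + (-2) * a1 * b0 * c4 + (- (a1 * b2 * c6)) + a1 * b3 * c5 + 2 * a1 * b4 * c0 + (- (a1 * b5 * c3)) + a1 * b6 * c2 + a2 * b0 * c5 + a2 * b1 * c6 + 2 * a2 * b3 * c4 + (-2) * a2 * b4 * c3 + (- (a2 * b5 * c0)) + (- (a2 * b6 * c1)) + a3 * b0 * c6 + (- (a3 * b1 * c5)) + (-2) * a3 * b2 * c4 + 2 * a3 * b4 * c2 + a3 * b5 * c1 + (- (a3 * b6 * c0)) + 2 * a4 * b0 * c1 + (-2) * a4 * b1 * c0 + 2 * a4 * b2 * c3 + (-2) * a4 * b3 * c2 + (- (a5 * b0 * c2)) + a5 * b1 * c3 + a5 * b2 * c0 + (- (a5 * b3 * c1)) + (- (a6 * b0 * c3)) + (- (a6 * b1 * c2)) + a6 * b2 * c1 +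 a6 * b3 * c0).
Proof. rewrite /Jform3 /d2 /fundamental_form !act_J7 !br7Q !act_J7 !ip_G7; by field. Qed.
End Gen.


Ltac dv x := let a0 := fresh "a" in let a1 := fresh "a" in let a2 := fresh "a" in
  let a3 := fresh "a" in let a4 := fresh "a" in let a5 := fresh "a" in
  let a6 := fresh "a" in let a7 := fresh "a" in
  have [a0 [a1 [a2 [a3 [a4 [a5 [a6 [a7 ->]]]]]]]] := vec8_surj x.

Section Main.
Variable R : realType.
Local Notation V := 'cV[R]_8.

Lemma vec8_eq0 (l0 l1 l2 l3 l4 l5 l6 l7 : R) : vec8 l0 l1 l2 l3 l4 l5 l6 l7 = 0 ->
  l0 = 0 /\ l1 = 0 /\ l2 = 0 /\ l3 = 0 /\ l4 = 0 /\ l5 = 0 /\ l6 = 0 /\ l7 = 0.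
Proof.
rewrite zero8 => /matrixP h.
have := h (inord 0) ord0; have := h (inord 1) ord0; have := h (inord 2) ord0;
have := h (inord 3) ord0; have := h (inord 4) ord0; have := h (inord 5) ord0;
have := h (inord 6) ord0; have := h (inord 7) ord0.
by rewrite !vec8E.
Qed.

Lemma sumsq_pos (l0 l1 l2 l3 l4 l5 l6 l7 : R) : vec8 l0 l1 l2 l3 l4 l5 l6 l7 != 0 ->
  0 < l0 * l0 + l1 * l1 + l2 * l2 + l3 * l3 + l4 * l4 + l5 * l5 + l6 * l6 + l7 * l7.
Proof.
move=> hne; rewrite ltNge; apply: contra hne => hle.
apply/eqP; rewrite zero8; f_equal; nra.
Qed.


Lemma ip_G1_pos : inner_product (G1 R).
Proof.
split.
  apply/matrixP => i j; rewrite !mxE.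
  by case: i => [[|[|[|[|[|[|[|[|//]]]]]]]] Hi]; case: j => [[|[|[|[|[|[|[|[|//]]]]]]]] Hj].
move=> x; dv x => hx; rewrite ip_G1.
have := sumsq_pos hx; lra.
Qed.

Lemma ip_G7_pos : inner_product (G7 R).
Proof.
split.
  apply/matrixP => i j; rewrite !mxE.
  by case: i => [[|[|[|[|[|[|[|[|//]]]]]]]] Hi]; case: j => [[|[|[|[|[|[|[|[|//]]]]]]]] Hj].
move=> x; dv x => hx; rewrite ip_G7.
have := sumsq_pos hx; nra.
Qed.

Lemma ip_G3s_pos : inner_product (G3s R).
Proof.
split.
  apply/matrixP => i j; rewrite !mxE.
  by case: i => [[|[|[|[|[|[|[|[|//]]]]]]]] Hi]; case: j => [[|[|[|[|[|[|[|[|//]]]]]]]] Hj].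
move=> x; dv x => hx.
have -> : ip (G3s R) (vec8 a a0 a1 a2 a3 a4 a5 a6) (vec8 a a0 a1 a2 a3 a4 a5 a6) = ((-(1/4)) * a0 + (-(1/2)) * a1) * ((-(1/4)) * a0 + (-(1/2)) * a1) + ((-(3/4)) * a0 + (1/2) * a1) * ((-(3/4)) * a0 + (1/2) * a1) + (a + (1/4) * a0 + (-(1/2)) * a1) * (a + (1/4) * a0 + (-(1/2)) * a1) + ((5/4) * a0 + (-(1/2)) * a1 + (-2) * a2) * ((5/4) * a0 + (-(1/2)) * a1 + (-2) * a2) + (2 * a3) * (2 * a3) + (4 * a4) * (4 * a4) + (a5) * (a5) + (a6) * (a6).
  by rewrite ip_G3s; field.
apply: sumsq_pos; apply: contra hx => /eqP /vec8_eq0 [h0 [h1 [h2 [h3 [h4 [h5 [h6 h7]]]]]]].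
apply/eqP; rewrite zero8; f_equal; lra.
Qed.

Lemma cs_h5R3_JA : complex_structure (@h5R3 R) (JA R).
Proof.
split.
- move=> x; dv x; rewrite !act_JA opp8; f_equal; by field.
- move=> x y; dv x; dv y; rewrite !act_JA !br5 !act_JA !opp8 !add8 zero8; f_equal; by field.
Qed.

Lemma cs_h5R3_JB : complex_structure (@h5R3 R) (JB R).
Proof.
split.
- move=> x; dv x; rewrite !act_JB opp8; f_equal; by field.
- move=> x y; dv x; dv y; rewrite !act_JB !br5 !act_JB !opp8 !add8 zero8; f_equal; by field.
Qed.

Lemma cs_h5R3_JC : complex_structure (@h5R3 R) (JC R).
Proof.
split.
- move=> x; dv x; rewrite !act_JC opp8; f_equal; by field.
- move=> x y; dv x; dv y; rewrite !act_JC !br5 !act_JC !opp8 !add8 zero8; f_equal; by field.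
Qed.

Lemma cs_h3CR2_JA : complex_structure (@h3CR2 R) (JA R).
Proof.
split.
- move=> x; dv x; rewrite !act_JA opp8; f_equal; by field.
- move=> x y; dv x; dv y; rewrite !act_JA !br3C !act_JA !opp8 !add8 zero8; f_equal; by field.
Qed.

Lemma cs_h3CR2_JB : complex_structure (@h3CR2 R) (JB R).
Proof.
split.
- move=> x; dv x; rewrite !act_JB opp8; f_equal; by field.
- move=> x y; dv x; dv y; rewrite !act_JB !br3C !act_JB !opp8 !add8 zero8; f_equal; by field.
Qed.

Lemma cs_h3CR2_JC : complex_structure (@h3CR2 R) (JC R).
Proof.
split.
- move=> x; dv x; rewrite !act_JC opp8; f_equal; by field.
- move=> x y; dv x; dv y; rewrite !act_JC !br3C !act_JC !opp8 !add8 zero8; f_equal; by field.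
Qed.

Lemma cs_h3CR2_J3s : complex_structure (@h3CR2 R) (J3s R).
Proof.
split.
- move=> x; dv x; rewrite !act_J3s opp8; f_equal; by field.
- move=> x y; dv x; dv y; rewrite !act_J3s !br3C !act_J3s !opp8 !add8 zero8; f_equal; by field.
Qed.

Lemma cs_h7QR1_JA : complex_structure (@h7QR1 R) (JA R).
Proof.
split.
- move=> x; dv x; rewrite !act_JA opp8; f_equal; by field.
- move=> x y; dv x; dv y; rewrite !act_JA !br7Q !act_JA !opp8 !add8 zero8; f_equal; by field.
Qed.

Lemma cs_h7QR1_JB : complex_structure (@h7QR1 R) (JB R).
Proof.
split.
- move=> x; dv x; rewrite !act_JB opp8; f_equal; by field.
- move=> x y; dv x; dv y; rewrite !act_JB !br7Q !act_JB !opp8 !add8 zero8; f_equal; by field.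
Qed.

Lemma cs_h7QR1_JC : complex_structure (@h7QR1 R) (JC R).
Proof.
split.
- move=> x; dv x; rewrite !act_JC opp8; f_equal; by field.
- move=> x y; dv x; dv y; rewrite !act_JC !br7Q !act_JC !opp8 !add8 zero8; f_equal; by field.
Qed.

Lemma cs_h7QR1_J7 : complex_structure (@h7QR1 R) (J7 R).
Proof.
split.
- move=> x; dv x; rewrite !act_J7 opp8; f_equal; by field.
- move=> x y; dv x; dv y; rewrite !act_J7 !br7Q !act_J7 !opp8 !add8 zero8; f_equal; by field.
Qed.

Lemma cp_JA_G1 : compatible (JA R) (G1 R).
Proof. move=> x y; dv x; dv y; rewrite !act_JA !ip_G1; by field. Qed.

Lemma cp_JB_G1 : compatible (JB R) (G1 R).
Proof. move=> x y; dv x; dv y; rewrite !act_JB !ip_G1; by field. Qed.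

Lemma cp_JC_G1 : compatible (JC R) (G1 R).
Proof. move=> x y; dv x; dv y; rewrite !act_JC !ip_G1; by field. Qed.

Lemma cp_J3s_G3s : compatible (J3s R) (G3s R).
Proof. move=> x y; dv x; dv y; rewrite !act_J3s !ip_G3s; by field. Qed.

Lemma cp_J7_G7 : compatible (J7 R) (G7 R).
Proof. move=> x y; dv x; dv y; rewrite !act_J7 !ip_G7; by field. Qed.

Lemma hc_ABC : forall x : V, act (JA R) (act (JB R) x) = act (JC R) x /\ act (JB R) (act (JA R) x) = - act (JC R) x.
Proof. move=> x; dv x; rewrite !act_JA !act_JB !act_JA !act_JC opp8; split; f_equal; by field. Qed.

Lemma weak_h5R3 : has_weak_HKT (@h5R3 R).
Proof.
exists (JA R), (JB R), (JC R), (G1 R).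
split; last first.
  exists (vec8 1 0 0 0 0 0 0 0), (vec8 0 1 0 0 0 0 0 0), (vec8 0 0 1 0 0 0 0 0), (vec8 0 0 0 1 0 0 0 0).
  rewrite /bismut_torsion /d3 !br5 !gam_h5R3_JA_G1.
  apply/eqP => h. lra.
split.
- split; [exact: cs_h5R3_JA | exact: cs_h5R3_JB | exact: cs_h5R3_JC | exact: hc_ABC].
- exact: ip_G1_pos.
- split; [exact: cp_JA_G1 | split; [exact: cp_JB_G1 | exact: cp_JC_G1]].
- move=> x y z; dv x; dv y; dv z.
  by rewrite gam_h5R3_JA_G1 gam_h5R3_JB_G1 gam_h5R3_JC_G1.
Qed.

Lemma weak_h3CR2 : has_weak_HKT (@h3CR2 R).
Proof.
exists (JA R), (JB R), (JC R), (G1 R).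
split; last first.
  exists (vec8 1 0 0 0 0 0 0 0), (vec8 0 1 0 0 0 0 0 0), (vec8 0 0 1 0 0 0 0 0), (vec8 0 0 0 1 0 0 0 0).
  rewrite /bismut_torsion /d3 !br3C !gam_h3CR2_JA_G1.
  apply/eqP => h. lra.
split.
- split; [exact: cs_h3CR2_JA | exact: cs_h3CR2_JB | exact: cs_h3CR2_JC | exact: hc_ABC].
- exact: ip_G1_pos.
- split; [exact: cp_JA_G1 | split; [exact: cp_JB_G1 | exact: cp_JC_G1]].
- move=> x y z; dv x; dv y; dv z.
  by rewrite gam_h3CR2_JA_G1 gam_h3CR2_JB_G1 gam_h3CR2_JC_G1.
Qed.

Lemma weak_h7QR1 : has_weak_HKT (@h7QR1 R).
Proof.
exists (JA R), (JB R), (JC R), (G1 R).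
split; last first.
  exists (vec8 1 0 0 0 0 0 0 0), (vec8 0 1 0 0 0 0 0 0), (vec8 0 0 1 0 0 0 0 0), (vec8 0 0 0 1 0 0 0 0).
  rewrite /bismut_torsion /d3 !br7Q !gam_h7QR1_JA_G1.
  apply/eqP => h. lra.
split.
- split; [exact: cs_h7QR1_JA | exact: cs_h7QR1_JB | exact: cs_h7QR1_JC | exact: hc_ABC].
- exact: ip_G1_pos.
- split; [exact: cp_JA_G1 | split; [exact: cp_JB_G1 | exact: cp_JC_G1]].
- move=> x y z; dv x; dv y; dv z.
  by rewrite gam_h7QR1_JA_G1 gam_h7QR1_JB_G1 gam_h7QR1_JC_G1.
Qed.

Lemma skt_h3CR2 : has_SKT (@h3CR2 R).
Proof.
exists (J3s R), (G3s R).
split; [exact: cs_h3CR2_J3s | exact: ip_G3s_pos | exact: cp_J3s_G3s |].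
move=> x0 x1 x2 x3; dv x0; dv x1; dv x2; dv x3.
rewrite /d3 !br3C !gam_h3CR2_J3s_G3s; by field.
Qed.

Lemma skt_h7QR1 : has_SKT (@h7QR1 R).
Proof.
exists (J7 R), (G7 R).
split; [exact: cs_h7QR1_J7 | exact: ip_G7_pos | exact: cp_J7_G7 |].
move=> x0 x1 x2 x3; dv x0; dv x1; dv x2; dv x3.
rewrite /d3 !br7Q !gam_h7QR1_J7_G7; by field.
Qed.
End Main.

Section NoSKT.
Variable R : realType.
Local Notation V := 'cV[R]_8.
Definition zz : V := vec8 0 0 0 0 1 0 0 0.
Definition bet (x y : V) : R := e2 0 1 x y + e2 2 3 x y.

Lemma br5z (x y : V) : h5R3 x y = (- bet x y) *: zz.
Proof.
dv x; dv y; rewrite br5 /zz scale8 /bet /e2 !vec8E //=; f_equal; ring.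
Qed.

Lemma actZ (J : 'M[R]_8) c (v : V) : act J (c *: v) = c *: act J v.
Proof. by rewrite /act scalemxAr. Qed.

Lemma ipZl (G : 'M[R]_8) c (u v : V) : ip G (c *: u) v = c * ip G u v.
Proof.
rewrite /ip.
have -> : (c *: u)^T = c *: u^T by apply/matrixP => i j; rewrite !mxE.
by rewrite -!scalemxAl mxE.
Qed.

Lemma ipZr (G : 'M[R]_8) c (u v : V) : ip G u (c *: v) = c * ip G u v.
Proof. by rewrite /ip -scalemxAr mxE. Qed.

Lemma inv_bet (J : 'M[R]_8) : complex_structure (@h5R3 R) J ->
  forall x y, bet (act J x) (act J y) = bet x y.
Proof.
move=> [hJ hN] x y.
have e := hN x y.
rewrite !br5z !actZ in e.
have e' := congr1 (act J) e.
move: e e'; set A := bet (act J x) (act J y); set B := bet (act J x) y;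
  set C := bet x (act J y); set D := bet x y.
move=> e e'.
rewrite /act mulmx0 !mulmxBr -!scalemxAr in e'.
rewrite -/(act J (act J zz)) hJ -/(act J zz) in e'.
move: e e'; set W := act J zz => e e'.
have e1 := congr1 (fun v : V => v (inord 4) ord0) e.
have e2' := congr1 (fun v : V => v (inord 4) ord0) e'.
move: e1 e2'; rewrite /= !mxE inordK //=.
move=> e1 e2'.
have hs : (D - A) * (D - A) + (B + C) * (B + C) = 0 by nra.
have : D - A = 0 by nra.
by move=> /eqP; rewrite subr_eq0 => /eqP.
Qed.

Lemma gam5 (J G : 'M[R]_8) : complex_structure (@h5R3 R) J -> compatible J G ->
  forall x y w, Jform3 J (d2 (@h5R3 R) (fundamental_form J G)) x y w =
  bet x y * ip G zz w - bet x w * ip G zz y + bet y w * ip G zz x.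
Proof.
move=> hc hg x y w.
rewrite /Jform3 /d2 /fundamental_form !br5z !actZ !ipZl !(inv_bet hc) !hg; ring.
Qed.

Lemma no_skt5 : ~ has_SKT (@h5R3 R).
Proof.
move=> [J [G [hc hip hg hd]]].
have hz : zz != 0.
  by apply/eqP => /vec8_eq0 [_ [_ [_ [_ [h _]]]]]; move: h; apply/eqP; rewrite oner_eq0.
have hs := hip.2 zz hz.
have := hd (vec8 1 0 0 0 0 0 0 0) (vec8 0 1 0 0 0 0 0 0) (vec8 0 0 1 0 0 0 0 0) (vec8 0 0 0 1 0 0 0 0).
rewrite /d3 !br5z !(gam5 hc hg) !ipZr /bet /zz !scale8 /e2 !vec8E //=.
rewrite /zz in hs.
move=> h; lra.
Qed.
End NoSKT.

Theorem corollary4p3 (R : realType) :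
  (has_weak_HKT (@h5R3 R) /\ ~ has_SKT (@h5R3 R)) /\
  (has_SKT (@h3CR2 R) /\ has_weak_HKT (@h3CR2 R)) /\
  (has_SKT (@h7QR1 R) /\ has_weak_HKT (@h7QR1 R)).
Proof.
split; [split | split; split].
- exact: weak_h5R3.
- exact: no_skt5.
- exact: skt_h3CR2.
- exact: weak_h3CR2.
- exact: skt_h7QR1.
- exact: weak_h7QR1.
Qed.
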